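(* Let $f=a_1+2a_2+4a_3+8a_4\in\mathcal{GB}_n^{16}$ with $a_1,a_2,a_3,a_4\in\mathcal{B}_n$. Then $f$ is gbent if and only if: (i) when $n$ is even: for all $c_1,c_2,c_3\in\mathbb{F}_2$ the Boolean function $c_1a_1\oplus c_2a_2\oplus c_3a_3\oplus a_4$ is bent, and for all $\mathbf{u}\in\mathbb{F}_2^n$ $$\mathcal{W}_{a_4}(\mathbf{u})\mathcal{W}_{a_2\oplus a_4}(\mathbf{u})=\mathcal{W}_{a_3\oplus a_4}(\mathbf{u})\mathcal{W}_{a_2\oplus a_3\oplus a_4}(\mathbf{u})=\mathcal{W}_{a_1\oplus a_4}(\mathbf{u})\mathcal{W}_{a_1\oplus a_2\oplus a_4}(\mathbf{u})=\mathcal{W}_{a_1\oplus a_3\oplus a_4}(\mathbf{u})\mathcal{W}_{a_1\oplus a_2\oplus a_3\oplus a_4}(\mathbf{u})$$ and $\mathcal{W}_{a_4}(\mathbf{u})\mathcal{W}_{a_3\oplus a_4}(\mathbf{u})=\mathcal{W}_{a_1\oplus a_4}(\mathbf{u})\mathcal{W}_{a_1\oplus a_3\oplus a_4}(\mathbf{u})$; (ii) when $n$ is odd: for all $c_1,c_2,c_3\in\mathbb{F}_2$ the Boolean function $c_1a_1\oplus c_2a_2\oplus c_3a_3\oplus a_4$ is semibent, and for every $\mathbf{u}\in\mathbb{F}_2^n$ one of the following holds: either $\mathcal{W}_{a_4}(\mathbf{u})\mathcal{W}_{a_2\oplus a_4}(\mathbf{u})=\mathcal{W}_{a_1\oplus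 a_4}(\mathbf{u})\mathcal{W}_{a_1\oplus a_2\oplus a_4}(\mathbf{u})=\pm2^{n+1}$ and $\mathcal{W}_{a_3\oplus a_4}(\mathbf{u})=\mathcal{W}_{a_2\oplus a_3\oplus a_4}(\mathbf{u})=\mathcal{W}_{a_1\oplus a_3\oplus a_4}(\mathbf{u})=\mathcal{W}_{a_1\oplus a_2\oplus a_3\oplus a_4}(\mathbf{u})=0$; or $\mathcal{W}_{a_4}(\mathbf{u})=\mathcal{W}_{a_2\oplus a_4}(\mathbf{u})=\mathcal{W}_{a_1\oplus a_4}(\mathbf{u})=\mathcal{W}_{a_1\oplus a_2\oplus a_4}(\mathbf{u})=0$ and $\mathcal{W}_{a_3\oplus a_4}(\mathbf{u})\mathcal{W}_{a_2\oplus a_3\oplus a_4}(\mathbf{u})=\mathcal{W}_{a_1\oplus a_3\oplus a_4}(\mathbf{u})\mathcal{W}_{a_1\oplus a_2\oplus a_3\oplus a_4}(\mathbf{u})=\pm2^{n+1}$.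
   Context: $\mathcal{B}_n$: Boolean functions $\mathbb{F}_2^n\to\mathbb{F}_2$; $\mathcal{GB}_n^q$: functions $\mathbb{F}_2^n\to\mathbb{Z}_q$; in $a_1+2a_2+4a_3+8a_4$ the values $0,1$ are viewed as integers and the sum is taken in $\mathbb{Z}_{16}$, while $\oplus$ is addition in $\mathbb{F}_2$. Walsh–Hadamard transform: $\mathcal{W}_g(\mathbf{u})=\sum_{\mathbf{x}\in\mathbb{F}_2^n}(-1)^{g(\mathbf{x})+\mathbf{u}\cdot\mathbf{x}}$. Generalized Walsh–Hadamard transform: $\mathcal{H}^{(q)}_f(\mathbf{u})=\sum_{\mathbf{x}}\zeta_q^{f(\mathbf{x})}(-1)^{\mathbf{u}\cdot\mathbf{x}}$, $\zeta_q=e^{2\pi i/q}$. $f\in\mathcal{GB}_n^q$ is gbent if $|\mathcal{H}^{(q)}_f(\mathbf{u})|=2^{n/2}$ for all $\mathbf{u}$. $g\in\mathcal{B}_n$ is bent if $|\mathcal{W}_g(\mathbf{u})|=2^{n/2}$ for all $\mathbf{u}$; $g$ is semibent if $|\mathcal{W}_g(\mathbf{u})|\in\{0,2^{(n+1)/2}\}$ for all $\mathbf{u}$ when $n$ is odd, resp. $\{0,2^{(n+2)/2}\}$ when $n$ is even. *)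

(* Defs.v *)
From HB Require Import structures.
From mathcomp Require Import all_boot all_order all_algebra all_field.
Set Implicit Arguments. Unset Strict Implicit. Unset Printing Implicit Defensive.
Import Order.TTheory GRing.Theory Num.Theory.
Local Open Scope ring_scope.

(* F_2^n, with F_2 = bool (xor = addb, product = andb). *)
Definition Vn (n : nat) := {ffun 'I_n -> bool}.

Definition dot (n : nat) (u x : Vn n) : bool := odd (\sum_(i < n) (u i && x i))%N.

Definition Bfun (n : nat) := Vn n -> bool.

Definition walsh (n : nat) (g : Bfun n) (u : Vn n) : int :=
  \sum_(x : Vn n) (-1) ^+ (g x (+) dot u x).

(* zeta_q = e^{2 pi i / q} for even q: (q/2).-root (-1) is the root with
   minimal non-negative argument, i.e. e^{i pi / (q/2)}. *)
Definition zeta (q : nat) : algC := (q./2).-root (-1).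

(* Generalized Walsh-Hadamard transform of f : F_2^n -> Z_q (values as nats < q). *)
Definition gwalsh (q n : nat) (f : Vn n -> nat) (u : Vn n) : algC :=
  \sum_(x : Vn n) zeta q ^+ (f x %% q)%N * (-1) ^+ dot u x.

Definition gbent (q n : nat) (f : Vn n -> nat) : Prop :=
  forall u : Vn n, `|gwalsh q f u| = sqrtC (2%:R ^+ n).

Definition bent (n : nat) (g : Bfun n) : Prop :=
  forall u : Vn n, `|(walsh g u)%:~R : algC| = sqrtC (2%:R ^+ n).

Definition semibent (n : nat) (g : Bfun n) : Prop :=
  forall u : Vn n,
    if odd n then (absz (walsh g u) == 0)%N || (absz (walsh g u) == 2 ^ (n.+1)./2)%N
    else (absz (walsh g u) == 0)%N || (absz (walsh g u) == 2 ^ (n.+2)./2)%N.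

Definition gb16 (n : nat) (a1 a2 a3 a4 : Bfun n) : Vn n -> nat :=
  fun x => (((a1 x : nat) + 2 * (a2 x : nat) + 4 * (a3 x : nat) + 8 * (a4 x : nat)) %% 16)%N.

Definition lincomb (n : nat) (a1 a2 a3 a4 : Bfun n) (c1 c2 c3 : bool) : Bfun n :=
  fun x => (c1 && a1 x) (+) (c2 && a2 x) (+) (c3 && a3 x) (+) a4 x.

Definition xorf (n : nat) (g h : Bfun n) : Bfun n := fun x => g x (+) h x.

(* Main.v *)
Require Import Defs.
From HB Require Import structures.
From mathcomp Require Import all_boot all_order all_algebra all_field.
From mathcomp Require Import ring lra zify.
Import Order.TTheory GRing.Theory Num.Theory.
Local Open Scope ring_scope.

Record V8 := mk8 { x0 : int; x1 : int; x2 : int; x3 : int;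
                   x4 : int; x5 : int; x6 : int; x7 : int }.

Definition R0 (d : V8) : int :=
  x0 d ^+ 2 + x1 d ^+ 2 + x2 d ^+ 2 + x3 d ^+ 2 + x4 d ^+ 2 + x5 d ^+ 2 + x6 d ^+ 2 + x7 d ^+ 2.
Definition R1 (d : V8) : int :=
  x0 d * x1 d - x0 d * x7 d + x1 d * x2 d + x2 d * x3 d + x3 d * x4 d + x4 d * x5 d + x5 d * x6 d + x6 d * x7 d.
Definition R2 (d : V8) : int :=
  x0 d * x2 d - x0 d * x6 d + x1 d * x3 d - x1 d * x7 d + x2 d * x4 d + x3 d * x5 d + x4 d * x6 d + x5 d * x7 d.
Definition R3 (d : V8) : int :=
  x0 d * x3 d - x0 d * x5 d + x1 d * x4 d - x1 d * x6 d + x2 d * x5 d - x2 d * x7 d + x3 d * x6 d + x4 d * x7 d.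

Definition Req (n : nat) (d : V8) : Prop :=
  [/\ R0 d = 2 ^+ n, R1 d = 0, R2 d = 0 & R3 d = 0].

Definition Tm (e : V8) : V8 :=
  mk8 (x0 e - x4 e) (x1 e - x5 e) (x2 e - x6 e) (x3 e - x7 e)
      (x4 e + x0 e) (x5 e + x1 e) (x6 e + x2 e) (x7 e + x3 e).
Definition sc (a : int) (e : V8) : V8 :=
  mk8 (a * x0 e) (a * x1 e) (a * x2 e) (a * x3 e) (a * x4 e) (a * x5 e) (a * x6 e) (a * x7 e).

Lemma R_Tm e : [/\ R0 (Tm e) = 2 * R0 e, R1 (Tm e) = 2 * R1 e,
                   R2 (Tm e) = 2 * R2 e & R3 (Tm e) = 2 * R3 e].
Proof. by rewrite /R0 /R1 /R2 /R3 /=; split; ring. Qed.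

Lemma R_sc2 e : [/\ R0 (sc 2 e) = 4 * R0 e, R1 (sc 2 e) = 4 * R1 e,
                   R2 (sc 2 e) = 4 * R2 e & R3 (sc 2 e) = 4 * R3 e].
Proof. by rewrite /R0 /R1 /R2 /R3 /=; split; ring. Qed.

Definition bi (b : bool) : int := (b : nat)%:Z.

Lemma par_bool (b0 b1 b2 b3 b4 b5 b6 b7 : bool) :
  let d := mk8 (bi b0) (bi b1) (bi b2) (bi b3) (bi b4) (bi b5) (bi b6) (bi b7) in
  (2 %| R0 d)%Z ==> (2 %| R1 d)%Z ==> (2 %| R2 d)%Z ==> (2 %| R3 d)%Z ==>
  [&& b0 == b4, b1 == b5, b2 == b6 & b3 == b7].
Proof. by case: b0; case: b1; case: b2; case: b3; case: b4; case: b5; case: b6; case: b7. Qed.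

Lemma mod2E (x : int) : exists q b, x = q * 2 + bi b.
Proof.
exists (x %/ 2)%Z, ((x %% 2)%Z == 1).
have h0 : (0 <= (x %% 2)%Z) by apply: modz_ge0.
have h1 : ((x %% 2)%Z < 2) by apply: ltz_pmod.
rewrite {1}(divz_eq x 2); congr (_ + _).
have : (x %% 2)%Z = 0 \/ (x %% 2)%Z = 1 by lia.
by case=> ->.
Qed.

Lemma dvd2P (x : int) : (2 %| x)%Z <-> exists q, x = q * 2.
Proof. by split => [/dvdzP|/dvdzP]. Qed.

Lemma parity n d : Req n d -> (0 < n)%N ->
  [/\ (2 %| x0 d - x4 d)%Z, (2 %| x1 d - x5 d)%Z, (2 %| x2 d - x6 d)%Z &
      (2 %| x3 d - x7 d)%Z].
Proof.
case: d => d0 d1 d2 d3 d4 d5 d6 d7 [e0 e1 e2 e3] n0.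
have [q0 [b0 E0]] := mod2E d0. have [q1 [b1 E1]] := mod2E d1.
have [q2 [b2 E2]] := mod2E d2. have [q3 [b3 E3]] := mod2E d3.
have [q4 [b4 E4]] := mod2E d4. have [q5 [b5 E5]] := mod2E d5.
have [q6 [b6 E6]] := mod2E d6. have [q7 [b7 E7]] := mod2E d7.
subst d0 d1 d2 d3 d4 d5 d6 d7.
move: e0 e1 e2 e3; rewrite /R0 /R1 /R2 /R3 /=.
set B0 := bi b0; set B1 := bi b1; set B2 := bi b2; set B3 := bi b3;
set B4 := bi b4; set B5 := bi b5; set B6 := bi b6; set B7 := bi b7.
move=> e0 e1 e2 e3.
have := par_bool b0 b1 b2 b3 b4 b5 b6 b7; rewrite /= /R0 /R1 /R2 /R3 /= -/B0 -/B1 -/B2 -/B3 -/B4 -/B5 -/B6 -/B7.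
have p2 : exists q, (2 : int) ^+ n = q * 2.
  by exists (2 ^+ n.-1); rewrite -exprSr prednK.
case: p2 => p Hp.
set S0 := 2*B0*q0 + 2*B1*q1 + 2*B2*q2 + 2*B3*q3 + 2*B4*q4 + 2*B5*q5 + 2*B6*q6 + 2*B7*q7 + 2*q0 ^+ 2 + 2*q1 ^+ 2 + 2*q2 ^+ 2 + 2*q3 ^+ 2 + 2*q4 ^+ 2 + 2*q5 ^+ 2 + 2*q6 ^+ 2 + 2*q7 ^+ 2.
set S1 := B0*q1 - B0*q7 + B1*q0 + B1*q2 + B2*q1 + B2*q3 + B3*q2 + B3*q4 + B4*q3 + B4*q5 + B5*q4 + B5*q6 + B6*q5 + B6*q7 - B7*q0 + B7*q6 + 2*q0*q1 - 2*q0*q7 + 2*q1*q2 + 2*q2*q3 + 2*q3*q4 + 2*q4*q5 + 2*q5*q6 + 2*q6*q7.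
set S2 := B0*q2 - B0*q6 + B1*q3 - B1*q7 + B2*q0 + B2*q4 + B3*q1 + B3*q5 + B4*q2 + B4*q6 + B5*q3 + B5*q7 - B6*q0 + B6*q4 - B7*q1 + B7*q5 + 2*q0*q2 - 2*q0*q6 + 2*q1*q3 - 2*q1*q7 + 2*q2*q4 + 2*q3*q5 + 2*q4*q6 + 2*q5*q7.
set S3 := B0*q3 - B0*q5 + B1*q4 - B1*q6 + B2*q5 - B2*q7 + B3*q0 + B3*q6 + B4*q1 + B4*q7 - B5*q0 + B5*q2 - B6*q1 + B6*q3 - B7*q2 + B7*q4 + 2*q0*q3 - 2*q0*q5 + 2*q1*q4 - 2*q1*q6 + 2*q2*q5 - 2*q2*q7 + 2*q3*q6 + 2*q4*q7.
have -> : (2 %| B0 ^+ 2 + B1 ^+ 2 + B2 ^+ 2 + B3 ^+ 2 + B4 ^+ 2 + B5 ^+ 2 + B6 ^+ 2 + B7 ^+ 2)%Z.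
  apply/dvd2P; exists (p - S0); rewrite mulrBl -Hp -e0 /S0; ring.
have -> : (2 %| B0 * B1 - B0 * B7 + B1 * B2 + B2 * B3 + B3 * B4 + B4 * B5 + B5 * B6 + B6 * B7)%Z.
  apply/dvd2P; exists (- S1); apply/eqP; rewrite -subr_eq0 -e1 /S1; apply/eqP; ring.
have -> : (2 %| B0 * B2 - B0 * B6 + B1 * B3 - B1 * B7 + B2 * B4 + B3 * B5 + B4 * B6 + B5 * B7)%Z.
  apply/dvd2P; exists (- S2); apply/eqP; rewrite -subr_eq0 -e2 /S2; apply/eqP; ring.
have -> : (2 %| B0 * B3 - B0 * B5 + B1 * B4 - B1 * B6 + B2 * B5 - B2 * B7 + B3 * B6 + B4 * B7)%Z.
  apply/dvd2P; exists (- S3); apply/eqP; rewrite -subr_eq0 -e3 /S3; apply/eqP; ring.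
move=> /and4P[/eqP h0 /eqP h1 /eqP h2 /eqP h3].
rewrite /B0 /B1 /B2 /B3 /B4 /B5 /B6 /B7 h0 h1 h2 h3.
split; apply/dvd2P.
- by exists (q0 - q4); ring.
- by exists (q1 - q5); ring.
- by exists (q2 - q6); ring.
- by exists (q3 - q7); ring.
Qed.

Arguments parity {n d}.
Lemma descent1 n d : Req n d -> (0 < n)%N -> exists e, d = Tm e /\ Req n.-1 e.
Proof.
move=> hR n0; have [p0 p1 p2 p3] := parity hR n0.
move: hR; case: d p0 p1 p2 p3 => d0 d1 d2 d3 d4 d5 d6 d7 /=.
move=> /dvd2P[t0 h0] /dvd2P[t1 h1] /dvd2P[t2 h2] /dvd2P[t3 h3] hR.
set e := mk8 (d4 + t0) (d5 + t1) (d6 + t2) (d7 + t3) (- t0) (- t1) (- t2) (- t3).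
have de : mk8 d0 d1 d2 d3 d4 d5 d6 d7 = Tm e.
  rewrite /Tm /e /=; congr mk8; lia.
exists e; split => //.
move: hR; rewrite de; have [r0 r1 r2 r3] := R_Tm e.
rewrite /Req r0 r1 r2 r3 => -[e0 e1 e2 e3].
have h2n : (2 : int) ^+ n = 2 * 2 ^+ n.-1 by rewrite -exprS prednK.
split; lia.
Qed.

Arguments descent1 {n d}.
Lemma descent2 n d : Req n.+2 d -> exists e, d = sc 2 e /\ Req n e.
Proof.
move=> hR; have [e [de hRe]] := descent1 hR (ltn0Sn _).
have [p0 p1 p2 p3] := parity hRe (ltn0Sn _).
move: hR; rewrite de; case: e de hRe p0 p1 p2 p3 => e0 e1 e2 e3 e4 e5 e6 e7 /= de hRe.
move=> /dvd2P[t0 h0] /dvd2P[t1 h1] /dvd2P[t2 h2] /dvd2P[t3 h3] hR.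
set f := mk8 t0 t1 t2 t3 (e4 + t0) (e5 + t1) (e6 + t2) (e7 + t3).
have df : Tm (mk8 e0 e1 e2 e3 e4 e5 e6 e7) = sc 2 f.
  rewrite /Tm /f /sc /=; congr mk8; lia.
exists f; split => //.
move: hR; rewrite df; have [r0 r1 r2 r3] := R_sc2 f.
rewrite /Req r0 r1 r2 r3 => -[z0 z1 z2 z3].
have h2n : (2 : int) ^+ n.+2 = 4 * 2 ^+ n by rewrite !exprS; ring.
split; lia.
Qed.

Definition uv (s : int) (j : nat) : V8 :=
  mk8 (if j == 0%N then s else 0) (if j == 1%N then s else 0)
      (if j == 2%N then s else 0) (if j == 3%N then s else 0)
      (if j == 4%N then s else 0) (if j == 5%N then s else 0)
      (if j == 6%N then s else 0) (if j == 7%N then s else 0).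

Definition pat (n : nat) (s : int) (j : nat) : V8 :=
  sc (2 ^+ n./2) (if odd n then Tm (uv s j) else uv s j).

Definition Sol (n : nat) (d : V8) : Prop :=
  exists s j, [/\ s ^+ 2 = 1, (j < 8)%N & d = pat n s j].

Lemma sq1 (y x : int) : y + x ^+ 2 = 1 -> 0 <= y ->
  (x = 0 /\ y = 1) \/ ((x = 1 \/ x = -1) /\ y = 0).
Proof.
move=> h hy.
have [x0|nx] := eqVneq x 0; first by subst x; left; split=> //; move: h; rewrite expr2 mul0r addr0.
have hx : 1 <= x ^+ 2.
  by rewrite expr2; nia.
right; split; last lia.
have : (x == 1) || (x == -1) by rewrite -sqrf_eq1; apply/eqP; lia.
by case/orP => /eqP ->; [left|right].
Qed.
Lemma sq0 (y x : int) : y + x ^+ 2 = 0 -> 0 <= y -> y = 0 /\ x = 0.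
Proof.
move=> h hy; have hx : 0 <= x ^+ 2 by apply: sqr_ge0.
have y0 : y = 0 by lia.
by split=> //; apply/eqP; rewrite -sqrf_eq0; apply/eqP; lia.
Qed.

Ltac nn := repeat (apply: addr_ge0); apply: sqr_ge0.

Lemma unit8 e : R0 e = 1 -> exists s j, [/\ s ^+ 2 = 1, (j < 8)%N & e = uv s j].
Proof.
case: e => e0 e1 e2 e3 e4 e5 e6 e7; rewrite /R0 /= => h7.
have [[z7 h6]|[s7 g6]] := sq1 _ _ h7 ltac:(nn); last first.
{ have [g5 z6] := sq0 _ _ g6 ltac:(nn). have [g4 z5] := sq0 _ _ g5 ltac:(nn). have [g3 z4] := sq0 _ _ g4 ltac:(nn). have [g2 z3] := sq0 _ _ g3 ltac:(nn). have [g1 z2] := sq0 _ _ g2 ltac:(nn). have [g0 z1] := sq0 _ _ g1 ltac:(nn). have z0 : e0 = 0 by apply/eqP; rewrite -sqrf_eq0 g0. exists e7, 7%N; subst; split; [by case: s7 => -> | by [] | by rewrite /uv]. }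
have [[z6 h5]|[s6 g5]] := sq1 _ _ h6 ltac:(nn); last first.
{ have [g4 z5] := sq0 _ _ g5 ltac:(nn). have [g3 z4] := sq0 _ _ g4 ltac:(nn). have [g2 z3] := sq0 _ _ g3 ltac:(nn). have [g1 z2] := sq0 _ _ g2 ltac:(nn). have [g0 z1] := sq0 _ _ g1 ltac:(nn). have z0 : e0 = 0 by apply/eqP; rewrite -sqrf_eq0 g0. exists e6, 6%N; subst; split; [by case: s6 => -> | by [] | by rewrite /uv]. }
have [[z5 h4]|[s5 g4]] := sq1 _ _ h5 ltac:(nn); last first.
{ have [g3 z4] := sq0 _ _ g4 ltac:(nn). have [g2 z3] := sq0 _ _ g3 ltac:(nn). have [g1 z2] := sq0 _ _ g2 ltac:(nn). have [g0 z1] := sq0 _ _ g1 ltac:(nn). have z0 : e0 = 0 by apply/eqP; rewrite -sqrf_eq0 g0. exists e5, 5%N; subst; split; [by case: s5 => -> | by [] | by rewrite /uv]. }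
have [[z4 h3]|[s4 g3]] := sq1 _ _ h4 ltac:(nn); last first.
{ have [g2 z3] := sq0 _ _ g3 ltac:(nn). have [g1 z2] := sq0 _ _ g2 ltac:(nn). have [g0 z1] := sq0 _ _ g1 ltac:(nn). have z0 : e0 = 0 by apply/eqP; rewrite -sqrf_eq0 g0. exists e4, 4%N; subst; split; [by case: s4 => -> | by [] | by rewrite /uv]. }
have [[z3 h2]|[s3 g2]] := sq1 _ _ h3 ltac:(nn); last first.
{ have [g1 z2] := sq0 _ _ g2 ltac:(nn). have [g0 z1] := sq0 _ _ g1 ltac:(nn). have z0 : e0 = 0 by apply/eqP; rewrite -sqrf_eq0 g0. exists e3, 3%N; subst; split; [by case: s3 => -> | by [] | by rewrite /uv]. }
have [[z2 h1]|[s2 g1]] := sq1 _ _ h2 ltac:(nn); last first.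
{ have [g0 z1] := sq0 _ _ g1 ltac:(nn). have z0 : e0 = 0 by apply/eqP; rewrite -sqrf_eq0 g0. exists e2, 2%N; subst; split; [by case: s2 => -> | by [] | by rewrite /uv]. }
have [[z1 h0]|[s1 g0]] := sq1 _ _ h1 ltac:(nn); last first.
{ have z0 : e0 = 0 by apply/eqP; rewrite -sqrf_eq0 g0. exists e1, 1%N; subst; split; [by case: s1 => -> | by [] | by rewrite /uv]. }
have : (e0 == 1) || (e0 == -1) by rewrite -sqrf_eq1 h0.
move=> /orP s0; have {}s0 : e0 = 1 \/ e0 = -1 by case: s0 => /eqP; [left|right].
exists e0, 0%N; subst; split; [by case: s0 => -> | by [] | by rewrite /uv].
Qed.

Lemma sc1 e : sc 1 e = e.
Proof. by case: e => * /=; rewrite /sc /= !mul1r. Qed.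

Lemma sc2sc k e : sc 2 (sc (2 ^+ k) e) = sc (2 ^+ k.+1) e.
Proof. by case: e => * /=; rewrite /sc /= exprS; congr mk8; ring. Qed.

Lemma pat_SS n s j : sc 2 (pat n s j) = pat n.+2 s j.
Proof. by rewrite /pat /= negbK sc2sc. Qed.

Lemma Req_Sol n : forall d, Req n d -> Sol n d.
Proof.
suff H : forall n, (forall d, Req n d -> Sol n d) /\ (forall d, Req n.+1 d -> Sol n.+1 d).
  by case: (H n) => h _; apply: h.
elim=> [|m [IH1 IH2]].
  split=> d.
  - case=> h0 _ _ _; have [s [j [hs hj ->]]] := unit8 d h0.
    by exists s, j; split=> //; rewrite /pat /= sc1.
  - move=> hR; have [e [-> [h0 _ _ _]]] := descent1 hR (ltn0Sn _).
    have [s [j [hs hj ->]]] := unit8 e h0.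
    by exists s, j; split=> //; rewrite /pat /= sc1.
split; first exact: IH2.
move=> d hR; have [e [-> hRe]] := descent2 _ _ hR.
have [s [j [hs hj ->]]] := IH1 e hRe.
by exists s, j; split=> //; rewrite pat_SS.
Qed.


Definition wv (d : V8) : V8 :=
  mk8 (x0 d + x1 d + x2 d + x3 d + x4 d + x5 d + x6 d + x7 d)
      (x0 d + x1 d + x2 d + x3 d - x4 d - x5 d - x6 d - x7 d)
      (x0 d + x1 d - x2 d - x3 d + x4 d + x5 d - x6 d - x7 d)
      (x0 d + x1 d - x2 d - x3 d - x4 d - x5 d + x6 d + x7 d)
      (x0 d - x1 d + x2 d - x3 d + x4 d - x5 d + x6 d - x7 d)
      (x0 d - x1 d + x2 d - x3 d - x4 d + x5 d - x6 d + x7 d)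
      (x0 d - x1 d - x2 d + x3 d + x4 d - x5 d - x6 d + x7 d)
      (x0 d - x1 d - x2 d + x3 d - x4 d + x5 d + x6 d - x7 d).

Definition Q0 (w : V8) : int := 8*x0 w ^+ 2 + 8*x1 w ^+ 2 + 8*x2 w ^+ 2 + 8*x3 w ^+ 2 + 8*x4 w ^+ 2 + 8*x5 w ^+ 2 + 8*x6 w ^+ 2 + 8*x7 w ^+ 2.
Definition Q1 (w : V8) : int := 6*x0 w ^+ 2 - 4*x0 w*x3 w - 4*x0 w*x5 w - 4*x0 w*x6 w + 6*x1 w ^+ 2 + 4*x1 w*x2 w + 4*x1 w*x4 w - 4*x1 w*x7 w + 2*x2 w ^+ 2 + 4*x2 w*x4 w + 4*x2 w*x7 w + 2*x3 w ^+ 2 + 4*x3 w*x5 w - 4*x3 w*x6 w - 6*x4 w ^+ 2 + 4*x4 w*x7 w - 6*x5 w ^+ 2 - 4*x5 w*x6 w - 2*x6 w ^+ 2 - 2*x7 w ^+ 2.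
Definition Q2 (w : V8) : int := 4*x0 w ^+ 2 - 8*x0 w*x3 w + 4*x1 w ^+ 2 + 8*x1 w*x2 w - 4*x2 w ^+ 2 - 4*x3 w ^+ 2 + 4*x4 w ^+ 2 - 8*x4 w*x7 w + 4*x5 w ^+ 2 + 8*x5 w*x6 w - 4*x6 w ^+ 2 - 4*x7 w ^+ 2.
Definition Q3 (w : V8) : int := 2*x0 w ^+ 2 - 4*x0 w*x3 w - 4*x0 w*x5 w + 4*x0 w*x6 w + 2*x1 w ^+ 2 + 4*x1 w*x2 w + 4*x1 w*x4 w + 4*x1 w*x7 w - 2*x2 w ^+ 2 - 4*x2 w*x4 w - 12*x2 w*x7 w - 2*x3 w ^+ 2 - 4*x3 w*x5 w + 12*x3 w*x6 w - 2*x4 w ^+ 2 + 4*x4 w*x7 w - 2*x5 w ^+ 2 - 4*x5 w*x6 w + 2*x6 w ^+ 2 + 2*x7 w ^+ 2.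

Lemma RQ d : [/\ 64 * R0 d = Q0 (wv d), 64 * R1 d = Q1 (wv d),
                 64 * R2 d = Q2 (wv d) & 64 * R3 d = Q3 (wv d)].
Proof. by rewrite /R0 /R1 /R2 /R3 /Q0 /Q1 /Q2 /Q3 /=; split; ring. Qed.

Lemma Q_sc a t : [/\ Q0 (sc a t) = a ^+ 2 * Q0 t, Q1 (sc a t) = a ^+ 2 * Q1 t,
                     Q2 (sc a t) = a ^+ 2 * Q2 t & Q3 (sc a t) = a ^+ 2 * Q3 t].
Proof. by rewrite /Q0 /Q1 /Q2 /Q3 /=; split; ring. Qed.

Lemma wv_sc a e : wv (sc a e) = sc a (wv e).
Proof. by rewrite /wv /sc /=; congr mk8; ring. Qed.

Definition Wcond (n : nat) (w : V8) : Prop :=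
  let P : int := 2 ^+ n.+1 in
  if ~~ odd n then
    (x0 w ^+ 2 = 2 ^+ n /\ x1 w ^+ 2 = 2 ^+ n /\ x2 w ^+ 2 = 2 ^+ n /\ x3 w ^+ 2 = 2 ^+ n /\
     x4 w ^+ 2 = 2 ^+ n /\ x5 w ^+ 2 = 2 ^+ n /\ x6 w ^+ 2 = 2 ^+ n /\ x7 w ^+ 2 = 2 ^+ n) /\
    [/\ x0 w * x2 w = x1 w * x3 w, x1 w * x3 w = x4 w * x6 w,
        x4 w * x6 w = x5 w * x7 w & x0 w * x1 w = x4 w * x5 w]
  else
    let S (a : int) := (absz a == 0)%N || (absz a == 2 ^ (n.+1)./2)%N in
    (S (x0 w) /\ S (x1 w) /\ S (x2 w) /\ S (x3 w) /\ S (x4 w) /\ S (x5 w) /\ S (x6 w) /\ S (x7 w)) /\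
    ([/\ x0 w * x2 w = x4 w * x6 w, x4 w * x6 w = P \/ x4 w * x6 w = - P &
         [/\ x1 w = 0, x3 w = 0, x5 w = 0 & x7 w = 0]] \/
     [/\ [/\ x0 w = 0, x2 w = 0, x4 w = 0 & x6 w = 0],
         x1 w * x3 w = x5 w * x7 w & x5 w * x7 w = P \/ x5 w * x7 w = - P]).

Definition Veven (v : V8) : Prop :=
  (x0 v ^+ 2 = 1 /\ x1 v ^+ 2 = 1 /\ x2 v ^+ 2 = 1 /\ x3 v ^+ 2 = 1 /\
   x4 v ^+ 2 = 1 /\ x5 v ^+ 2 = 1 /\ x6 v ^+ 2 = 1 /\ x7 v ^+ 2 = 1) /\
  [/\ x0 v * x2 v = x1 v * x3 v, x1 v * x3 v = x4 v * x6 v,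
      x4 v * x6 v = x5 v * x7 v & x0 v * x1 v = x4 v * x5 v].

Definition T3 (a : int) := a = 0 \/ a = 2 \/ a = -2.

Definition Vodd (v : V8) : Prop :=
  (T3 (x0 v) /\ T3 (x1 v) /\ T3 (x2 v) /\ T3 (x3 v) /\ T3 (x4 v) /\ T3 (x5 v) /\ T3 (x6 v) /\ T3 (x7 v)) /\
  ([/\ x0 v * x2 v = x4 v * x6 v, x4 v * x6 v = 4 \/ x4 v * x6 v = - 4 &
       [/\ x1 v = 0, x3 v = 0, x5 v = 0 & x7 v = 0]] \/
   [/\ [/\ x0 v = 0, x2 v = 0, x4 v = 0 & x6 v = 0],
       x1 v * x3 v = x5 v * x7 v & x5 v * x7 v = 4 \/ x5 v * x7 v = - 4]).

Lemma s_cases (s : int) : s ^+ 2 = 1 -> s = 1 \/ s = -1.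
Proof.
move=> h; have : (s == 1) || (s == -1) by rewrite -sqrf_eq1 h.
by case/orP => /eqP ->; [left|right].
Qed.

Definition Vevenb (v : V8) : bool :=
  [&& x0 v ^+ 2 == 1, x1 v ^+ 2 == 1, x2 v ^+ 2 == 1, x3 v ^+ 2 == 1,
   x4 v ^+ 2 == 1, x5 v ^+ 2 == 1, x6 v ^+ 2 == 1, x7 v ^+ 2 == 1,
   x0 v * x2 v == x1 v * x3 v, x1 v * x3 v == x4 v * x6 v,
   x4 v * x6 v == x5 v * x7 v & x0 v * x1 v == x4 v * x5 v].

Lemma VevenbP v : Vevenb v -> Veven v.
Proof.
by move=> /andP[/eqP ? /andP[/eqP ? /andP[/eqP ? /andP[/eqP ? /andP[/eqP ? /andP[/eqP ? /andP[/eqP ? /andP[/eqP ? /andP[/eqP ? /andP[/eqP ? /andP[/eqP ? /eqP ?]]]]]]]]]]]; do !split.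
Qed.

Lemma Veven_uv s j : s ^+ 2 = 1 -> (j < 8)%N -> Veven (wv (uv s j)).
Proof.
move=> /s_cases hs hj; apply: VevenbP.
by case: hs => ->; do 8 (case: j hj => [|j] hj; first by []).
Qed.

Definition T3b (a : int) := [|| a == 0, a == 2 | a == -2].
Lemma T3bP a : T3b a -> T3 a.
Proof. by case/or3P => /eqP ->; rewrite /T3; tauto. Qed.

Definition Voddb (v : V8) : bool :=
  [&& T3b (x0 v), T3b (x1 v), T3b (x2 v), T3b (x3 v), T3b (x4 v), T3b (x5 v), T3b (x6 v), T3b (x7 v) &
  [&& x0 v * x2 v == x4 v * x6 v, (x4 v * x6 v == 4) || (x4 v * x6 v == - 4) &
      [&& x1 v == 0, x3 v == 0, x5 v == 0 & x7 v == 0]] ||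
  [&& [&& x0 v == 0, x2 v == 0, x4 v == 0 & x6 v == 0],
      x1 v * x3 v == x5 v * x7 v & (x5 v * x7 v == 4) || (x5 v * x7 v == - 4)]].

Lemma VoddbP v : Voddb v -> Vodd v.
Proof.
move=> /andP[/T3bP ? /andP[/T3bP ? /andP[/T3bP ? /andP[/T3bP ? /andP[/T3bP ? /andP[/T3bP ? /andP[/T3bP ? /andP[/T3bP ? H]]]]]]]].
split; first by do !split.
case/orP: H => [/and3P[/eqP ? /orP h /and4P[/eqP ? /eqP ? /eqP ? /eqP ?]]|/and3P[/and4P[/eqP ? /eqP ? /eqP ? /eqP ?] /eqP ? /orP h]].
- by left; split=> //; case: h => /eqP ?; [left|right].
- by right; split=> //; case: h => /eqP ?; [left|right].
Qed.

Lemma Vodd_uv s j : s ^+ 2 = 1 -> (j < 8)%N -> Vodd (wv (Tm (uv s j))).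
Proof.
move=> /s_cases hs hj; apply: VoddbP.
by case: hs => ->; do 8 (case: j hj => [|j] hj; first by []).
Qed.

Lemma sq_sc (X a : int) : a ^+ 2 = 1 -> (X * a) ^+ 2 = X ^+ 2.
Proof. by move=> h; rewrite exprMn h mulr1. Qed.

Lemma prod_sc (X a b c d : int) : a * b = c * d -> X * a * (X * b) = X * c * (X * d).
Proof. by move=> h; rewrite mulrACA h mulrACA. Qed.

Lemma Wcond_even m v : Veven v -> Wcond (m.*2) (sc (2 ^+ m) v).
Proof.
have e2 : (2:int) ^+ m.*2 = (2 ^+ m) ^+ 2 by rewrite -exprM muln2.
case=> [[h0 [h1 [h2 [h3 [h4 [h5 [h6 h7]]]]]]] [s1 s2 s3 s4]].
rewrite /Wcond odd_double /= e2; split.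
  by do !split; apply: sq_sc.
by split; apply: prod_sc.
Qed.

Lemma PoszX2 k : ((2 ^ k)%N : int) = 2 ^+ k.
Proof. by elim: k => // k IH; rewrite expnS exprS PoszM IH. Qed.

Lemma Wcond_odd m v : Vodd v -> Wcond (m.*2.+1) (sc (2 ^+ m) v).
Proof.
have e2 : (2:int) ^+ (m.*2.+2) = (2 ^+ m) ^+ 2 * 4.
  by rewrite -exprM muln2 !exprS; ring.
have hh : (m.*2.+2)./2 = m.+1 by rewrite /= doubleK.
case=> [[h0 [h1 [h2 [h3 [h4 [h5 [h6 h7]]]]]]] H].
rewrite /Wcond /= odd_double /= e2 ?doubleK; split.
  have S3 (a : int) : T3 a -> (absz (2 ^+ m * a)%R == 0)%N || (absz (2 ^+ m * a)%R == 2 ^ m.+1)%N.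
    case=> [->|[->|->]]; rewrite ?mulr0 //; apply/orP; right;
    by rewrite ?mulrN ?abszN abszM abszX expnSr.
  by do !split; apply: S3.
have pm (X a : int) : a = 4 \/ a = -4 -> X ^+ 2 * a = X ^+ 2 * 4 \/ X ^+ 2 * a = - (X ^+ 2 * 4).
  by case=> ->; [left|right; rewrite mulrN].
case: H => [[p1 p2 [-> -> -> ->]]|[[-> -> -> ->] p1 p2]]; [left|right]; rewrite ?mulr0; split=> //.
- exact: prod_sc.
- by rewrite mulrACA -expr2; apply: pm.
- exact: prod_sc.
- by rewrite mulrACA -expr2; apply: pm.
Qed.

Lemma Sol_Wcond n d : Sol n d -> Wcond n (wv d).
Proof.
case=> s [j [hs hj ->]]; rewrite /pat wv_sc.
have E := odd_double_half n.
set m := n./2 in E *.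
case: (odd n) E => /= E; rewrite -E.
- by rewrite add1n; apply: Wcond_odd; apply: Vodd_uv.
- by rewrite add0n; apply: Wcond_even; apply: Veven_uv.
Qed.

Lemma V8eta v : v = mk8 (x0 v) (x1 v) (x2 v) (x3 v) (x4 v) (x5 v) (x6 v) (x7 v).
Proof. by case: v. Qed.

Lemma sq_pm (x X : int) : x ^+ 2 = X ^+ 2 -> exists b : bool, x = X * (-1) ^+ b.
Proof.
move=> /eqP; rewrite eqf_sqr => /orP[/eqP->|/eqP->].
- by exists false; rewrite mulr1.
- by exists true; rewrite mulrN1.
Qed.

Lemma Qeven_bool (b0 b1 b2 b3 b4 b5 b6 b7 : bool) :
  forall t, t = mk8 ((-1) ^+ b0) ((-1) ^+ b1) ((-1) ^+ b2) ((-1) ^+ b3)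
                    ((-1) ^+ b4) ((-1) ^+ b5) ((-1) ^+ b6) ((-1) ^+ b7) ->
  [&& x0 t * x2 t == x1 t * x3 t, x1 t * x3 t == x4 t * x6 t,
      x4 t * x6 t == x5 t * x7 t & x0 t * x1 t == x4 t * x5 t] ==>
  [&& Q0 t == 64, Q1 t == 0, Q2 t == 0 & Q3 t == 0].
Proof. by move=> t ->; case: b0; case: b1; case: b2; case: b3; case: b4; case: b5; case: b6; case: b7. Qed.

Definition T3z (a : int) := [|| a == 0, a == 1 | a == -1].

Lemma QoddA_bool (t0 t2 t4 t6 : int) : T3z t0 -> T3z t2 -> T3z t4 -> T3z t6 ->
  forall t, t = mk8 t0 0 t2 0 t4 0 t6 0 ->
  (t0 * t2 == t4 * t6) && ((t4 * t6 == 1) || (t4 * t6 == -1)) ==>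
  [&& Q0 t == 32, Q1 t == 0, Q2 t == 0 & Q3 t == 0].
Proof.
by do 4 (case/or3P => /eqP ->); move=> t ->.
Qed.

Lemma QoddB_bool (t1 t3 t5 t7 : int) : T3z t1 -> T3z t3 -> T3z t5 -> T3z t7 ->
  forall t, t = mk8 0 t1 0 t3 0 t5 0 t7 ->
  (t1 * t3 == t5 * t7) && ((t5 * t7 == 1) || (t5 * t7 == -1)) ==>
  [&& Q0 t == 32, Q1 t == 0, Q2 t == 0 & Q3 t == 0].
Proof.
by do 4 (case/or3P => /eqP ->); move=> t ->.
Qed.

Lemma c64 (a b c : int) : 64 * a = c -> c = b * 64 -> a = b.
Proof. lia. Qed.
Lemma c64z (a c : int) : 64 * a = c -> c = 0 -> a = 0.
Proof. lia. Qed.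

Lemma Wcond_Req_even m d : Wcond m.*2 (wv d) -> Req m.*2 d.
Proof.
rewrite /Wcond odd_double /=.
set X : int := 2 ^+ m.
have e2 : (2:int) ^+ m.*2 = X ^+ 2 by rewrite -exprM muln2.
rewrite e2 => -[[h0 [h1 [h2 [h3 [h4 [h5 [h6 h7]]]]]]] [s1 s2 s3 s4]].
have [b0 E0] := sq_pm _ _ h0; have [b1 E1] := sq_pm _ _ h1.
have [b2 E2] := sq_pm _ _ h2; have [b3 E3] := sq_pm _ _ h3.
have [b4 E4] := sq_pm _ _ h4; have [b5 E5] := sq_pm _ _ h5.
have [b6 E6] := sq_pm _ _ h6; have [b7 E7] := sq_pm _ _ h7.
pose t := mk8 ((-1) ^+ b0) ((-1) ^+ b1) ((-1) ^+ b2) ((-1) ^+ b3)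
             ((-1) ^+ b4) ((-1) ^+ b5) ((-1) ^+ b6) ((-1) ^+ b7).
have Ew : wv d = sc X t by rewrite [LHS]V8eta /= E0 E1 E2 E3 E4 E5 E6 E7.
move: s1 s2 s3 s4; rewrite E0 E1 E2 E3 E4 E5 E6 E7 => s1 s2 s3 s4.
have X0 : X ^+ 2 != 0 by apply: expf_neq0; apply: expf_neq0.
have c (a b e f : int) : X * a * (X * b) = X * e * (X * f) -> a * b = e * f.
  by rewrite (mulrACA X a) (mulrACA X e) -expr2 => /(mulfI X0).
have pre : [&& x0 t * x2 t == x1 t * x3 t, x1 t * x3 t == x4 t * x6 t,
      x4 t * x6 t == x5 t * x7 t & x0 t * x1 t == x4 t * x5 t].
  by rewrite /= (c _ _ _ _ s1) (c _ _ _ _ s2) (c _ _ _ _ s3) (c _ _ _ _ s4) !eqxx.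
move: (Qeven_bool b0 b1 b2 b3 b4 b5 b6 b7 t erefl) => /implyP /(_ pre).
move=> /and4P[/eqP q0 /eqP q1 /eqP q2 /eqP q3].
have [r0 r1 r2 r3] := RQ d; have [k0 k1 k2 k3] := Q_sc X t.
rewrite Ew in r0 r1 r2 r3; rewrite q0 in k0; rewrite q1 in k1; rewrite q2 in k2; rewrite q3 in k3.
rewrite mulr0 in k1 k2 k3.
by rewrite /Req e2; split; [apply: c64 r0 k0 | apply: c64z r1 k1 | apply: c64z r2 k2 | apply: c64z r3 k3].
Qed.

Lemma abs3 (a : int) k : (absz a == 0)%N || (absz a == 2 ^ k)%N ->
  exists t, T3z t /\ a = 2 ^+ k * t.
Proof.
rewrite -PoszX2; case/orP => /eqP h.
- by exists 0; split; [|rewrite mulr0; lia].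
- have [ha|ha] : a = Posz (2 ^ k) \/ a = - Posz (2 ^ k) by lia.
  + by exists 1; rewrite mulr1 ha.
  + by exists (-1); rewrite mulrN1 ha.
Qed.

Lemma pm1 (Y a : int) : Y ^+ 2 != 0 -> Y * a = Y ^+ 2 \/ Y * a = - Y ^+ 2 ->
  False.
Abort.

Lemma Wcond_Req_odd m d : Wcond m.*2.+1 (wv d) -> Req m.*2.+1 d.
Proof.
rewrite /Wcond /= odd_double /= ?doubleK.
set Y : int := 2 ^+ m.+1.
have eP : (2:int) ^+ m.*2.+2 = Y ^+ 2 by rewrite -exprM muln2 doubleS.
have eZ : Y ^+ 2 = 2 * 2 ^+ m.*2.+1 by rewrite -eP exprS.
rewrite eP => -[[h0 [h1 [h2 [h3 [h4 [h5 [h6 h7]]]]]]] H].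
have [t0 [T0 E0]] := abs3 _ _ h0; have [t1 [T1 E1]] := abs3 _ _ h1.
have [t2 [T2 E2]] := abs3 _ _ h2; have [t3 [T3 E3]] := abs3 _ _ h3.
have [t4 [T4 E4]] := abs3 _ _ h4; have [t5 [T5 E5]] := abs3 _ _ h5.
have [t6 [T6 E6]] := abs3 _ _ h6; have [t7 [T7 E7]] := abs3 _ _ h7.
rewrite -/Y in E0 E1 E2 E3 E4 E5 E6 E7.
pose t := mk8 t0 t1 t2 t3 t4 t5 t6 t7.
have Ew : wv d = sc Y t by rewrite [LHS]V8eta /= E0 E1 E2 E3 E4 E5 E6 E7.
move: H; rewrite E0 E1 E2 E3 E4 E5 E6 E7 => H.
have Y0 : Y != 0 by apply: expf_neq0.
have Y20 : Y ^+ 2 != 0 by apply: expf_neq0.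
have c (a b e f : int) : Y * a * (Y * b) = Y * e * (Y * f) -> a * b = e * f.
  by rewrite (mulrACA Y a) (mulrACA Y e) -expr2 => /(mulfI Y20).
have cp (a b : int) : Y * a * (Y * b) = Y ^+ 2 \/ Y * a * (Y * b) = - Y ^+ 2 ->
    (a * b == 1) || (a * b == -1).
  have e : Y * a * (Y * b) = Y ^+ 2 * (a * b) by rewrite mulrACA expr2.
  rewrite e => -[] h; apply/orP; [left|right]; apply/eqP; apply: (mulfI Y20);
  by rewrite h ?mulr1 ?mulrN1.
have cz (a : int) : Y * a = 0 -> a = 0.
  by move/eqP; rewrite mulf_eq0 (negbTE Y0) => /eqP.
have [r0 r1 r2 r3] := RQ d; have [k0 k1 k2 k3] := Q_sc Y t.
rewrite Ew in r0 r1 r2 r3.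
have fin : [&& Q0 t == 32, Q1 t == 0, Q2 t == 0 & Q3 t == 0] -> Req m.*2.+1 d.
  move=> /and4P[/eqP q0 /eqP q1 /eqP q2 /eqP q3].
  rewrite q0 eZ in k0; rewrite q1 mulr0 in k1; rewrite q2 mulr0 in k2; rewrite q3 mulr0 in k3.
  split; [apply: c64 r0 _; rewrite k0; ring | apply: c64z r1 k1 | apply: c64z r2 k2 | apply: c64z r3 k3].
case: H => [[p1 p2 [z1 z3 z5 z7]]|[[z0 z2 z4 z6] p1 p2]]; apply: fin.
- move: (cz _ z1) (cz _ z3) (cz _ z5) (cz _ z7) => u1 u3 u5 u7.
  rewrite /t u1 u3 u5 u7; apply: (implyP (QoddA_bool _ _ _ _ T0 T2 T4 T6 _ erefl)).
  by rewrite (c _ _ _ _ p1) eqxx (cp _ _ p2).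
- move: (cz _ z0) (cz _ z2) (cz _ z4) (cz _ z6) => u0 u2 u4 u6.
  rewrite /t u0 u2 u4 u6; apply: (implyP (QoddB_bool _ _ _ _ T1 T3 T5 T7 _ erefl)).
  by rewrite (c _ _ _ _ p1) eqxx (cp _ _ p2).
Qed.

Lemma point n d : Req n d <-> Wcond n (wv d).
Proof.
split; first by move=> /Req_Sol; apply: Sol_Wcond.
have E := odd_double_half n.
set m := n./2 in E; case: (odd n) E => /= <-.
- by rewrite add1n; apply: Wcond_Req_odd.
- by rewrite add0n; apply: Wcond_Req_even.
Qed.


Definition z16 : algC := 8.-root (-1).

Lemma z8 : z16 ^+ 8 = -1.
Proof. by rewrite /z16 rootCK. Qed.

Lemma z_norm : `|z16| = 1.
Proof.
apply: (pexpIrn (n := 8)) => //; rewrite ?qualifE /= ?normr_ge0 ?ler01 //.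
by rewrite -normrX z8 normrN normr1 expr1n.
Qed.

Lemma z_conj : z16^* = - z16 ^+ 7.
Proof.
have h : z16 * z16^* = 1 by rewrite -normCK z_norm expr1n.
have e : z16^* = - (z16^* * z16 ^+ 8) by rewrite z8 mulrN1 opprK.
by rewrite [LHS]e exprS mulrA (mulrC z16^*) h mul1r.
Qed.

Lemma z_prim : 16.-primitive_root z16.
Proof.
have z16e : z16 ^+ 16 = 1 by rewrite (exprM z16 8 2) z8 expr2 mulrNN mulr1.
have [m pm dm] := prim_order_exists (ltn0Sn 15) z16e.
have nd : ~~ (m %| 8)%N.
  rewrite (prim_order_dvd pm) z8; apply/eqP => h.
  have : (2%:R : algC) == 0 by rewrite mulrS mulr1n -{1}h addNr.
by rewrite pnatr_eq0.
suff -> : 16%N = m by [].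
have m16 : (m <= 16)%N by apply: dvdn_leq.
move: m16 dm nd; move: m {pm}.
by do 17! case => //.
Qed.

Lemma indep (r0 r1 r2 r3 r4 r5 r6 r7 : int) :
  r0%:~R + r1%:~R * z16 + r2%:~R * z16 ^+ 2 + r3%:~R * z16 ^+ 3 + r4%:~R * z16 ^+ 4
  + r5%:~R * z16 ^+ 5 + r6%:~R * z16 ^+ 6 + r7%:~R * z16 ^+ 7 = 0 ->
  r0 = 0 /\ r1 = 0 /\ r2 = 0 /\ r3 = 0 /\ r4 = 0 /\ r5 = 0 /\ r6 = 0 /\ r7 = 0.
Proof.
move=> H.
pose rs := [:: r0; r1; r2; r3; r4; r5; r6; r7].
pose q : {poly rat} := \poly_(i < 8) ((nth 0 rs i)%:~R).
have sq : (size q <= 8)%N by apply: size_poly.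
have Hr : root (map_poly ratr q) z16.
  rewrite /root (horner_coef_wide _ (n := 8)) ?size_map_poly //.
  rewrite !big_ord_recr big_ord0 /= !coef_map !coef_poly /= !rmorph_int.
  by rewrite add0r expr0 mulr1 expr1 H.
have [p [Dp _] Hdiv] := minCpolyP z16.
have sp : size p = 9%N.
  have e : size (map_poly (ratr : rat -> algC) p) = size p by rewrite size_map_poly.
  by rewrite -e -Dp (minCpoly_cyclotomic z_prim) size_cyclotomic.
have dq : (p %| q)%R by rewrite -Hdiv.
have q0 : q = 0.
  apply/eqP; apply: contraT => nq; have := dvdp_leq nq dq.
  by rewrite sp => /leq_trans/(_ sq).
have c i : (i < 8)%N -> nth 0 rs i = 0.
  move=> hi; have : q`_i = 0 by rewrite q0 coef0.
  by rewrite coef_poly hi => /eqP; rewrite intr_eq0 => /eqP.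
by do !split; [apply: (c 0%N) | apply: (c 1%N) | apply: (c 2%N) | apply: (c 3%N)
  | apply: (c 4%N) | apply: (c 5%N) | apply: (c 6%N) | apply: (c 7%N)].
Qed.

Lemma prod_id (y a0 a1 a2 a3 a4 a5 a6 a7 : algC) : y ^+ 8 = -1 ->
  (a0 + a1 * y + a2 * y ^+ 2 + a3 * y ^+ 3 + a4 * y ^+ 4 + a5 * y ^+ 5 + a6 * y ^+ 6 + a7 * y ^+ 7) *
  (a0 - a1 * y ^+ 7 - a2 * y ^+ 6 - a3 * y ^+ 5 - a4 * y ^+ 4 - a5 * y ^+ 3 - a6 * y ^+ 2 - a7 * y) =
  (a0 ^+ 2 + a1 ^+ 2 + a2 ^+ 2 + a3 ^+ 2 + a4 ^+ 2 + a5 ^+ 2 + a6 ^+ 2 + a7 ^+ 2)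
  + (a0*a1 - a0*a7 + a1*a2 + a2*a3 + a3*a4 + a4*a5 + a5*a6 + a6*a7) * (y - y ^+ 7)
  + (a0*a2 - a0*a6 + a1*a3 - a1*a7 + a2*a4 + a3*a5 + a4*a6 + a5*a7) * (y ^+ 2 - y ^+ 6)
  + (a0*a3 - a0*a5 + a1*a4 - a1*a6 + a2*a5 - a2*a7 + a3*a6 + a4*a7) * (y ^+ 3 - y ^+ 5).
Proof.
move=> h; apply/eqP; rewrite -subr_eq0; apply/eqP.
have E : forall L R : algC, L - R = (y ^+ 8 + 1) * ((- a1 ^+ 2 - a2 ^+ 2 - a3 ^+ 2 - a4 ^+ 2 - a5 ^+ 2 - a6 ^+ 2 - a7 ^+ 2) * y ^+ 0 + (- a1*a2 - a2*a3 - a3*a4 - a4*a5 - a5*a6 - a6*a7) * y ^+ 1 + (- a1*a3 - a2*a4 - a3*a5 - a4*a6 - a5*a7) * y ^+ 2 + (- a1*a4 - a2*a5 - a3*a6 - a4*a7) * y ^+ 3 + (- a1*a5 - a2*a6 - a3*a7) * y ^+ 4 + (- a1*a6 - a2*a7) * y ^+ 5 + (- a1*a7) * y ^+ 6) -> L - R = 0.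
  by move=> L R ->; rewrite h addNr mul0r.
apply: E; ring.
Qed.

Definition HD (d : V8) : algC :=
  (x0 d)%:~R + (x1 d)%:~R * z16 + (x2 d)%:~R * z16 ^+ 2 + (x3 d)%:~R * z16 ^+ 3
  + (x4 d)%:~R * z16 ^+ 4 + (x5 d)%:~R * z16 ^+ 5 + (x6 d)%:~R * z16 ^+ 6 + (x7 d)%:~R * z16 ^+ 7.

Lemma cpow (y : algC) : y ^+ 8 = -1 ->
  [/\ (- y ^+ 7) ^+ 2 = - y ^+ 6, (- y ^+ 7) ^+ 3 = - y ^+ 5, (- y ^+ 7) ^+ 4 = - y ^+ 4,
      (- y ^+ 7) ^+ 5 = - y ^+ 3 & [/\ (- y ^+ 7) ^+ 6 = - y ^+ 2, (- y ^+ 7) ^+ 7 = - y ^+ 1 & (- y ^+ 7) ^+ 1 = - y ^+ 7]].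
Proof.
move=> h.
have E (q L R : algC) : L - R = (y ^+ 8 + 1) * q -> L = R.
  by rewrite h addNr mul0r => /eqP; rewrite subr_eq0 => /eqP.
split; [by apply: (E (y ^+ 6)); ring | by apply: (E (y ^+ 5 - y ^+ 13)); ring
  | by apply: (E (y ^+ 4 - y ^+ 12 + y ^+ 20)); ring | by apply: (E (y ^+ 3 - y ^+ 11 + y ^+ 19 - y ^+ 27)); ring | split].
- by apply: (E (y ^+ 2 - y ^+ 10 + y ^+ 18 - y ^+ 26 + y ^+ 34)); ring.
- by apply: (E (y ^+ 1 - y ^+ 9 + y ^+ 17 - y ^+ 25 + y ^+ 33 - y ^+ 41)); ring.
- by rewrite expr1.
Qed.

Lemma HD_norm (d : V8) : HD d * (HD d)^* =
  (R0 d)%:~R + (R1 d)%:~R * (z16 - z16 ^+ 7) + (R2 d)%:~R * (z16 ^+ 2 - z16 ^+ 6)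
  + (R3 d)%:~R * (z16 ^+ 3 - z16 ^+ 5).
Proof.
have [c2 c3 c4 c5 [c6 c7 c1]] := cpow _ z8.
have -> : (HD d)^* = (x0 d)%:~R - (x1 d)%:~R * z16 ^+ 7 - (x2 d)%:~R * z16 ^+ 6
   - (x3 d)%:~R * z16 ^+ 5 - (x4 d)%:~R * z16 ^+ 4 - (x5 d)%:~R * z16 ^+ 3
   - (x6 d)%:~R * z16 ^+ 2 - (x7 d)%:~R * z16.
  rewrite /HD !rmorphD !(rmorphXn, rmorphM) !rmorph_int /= z_conj.
  rewrite -[- z16 ^+ 7]expr1 c1 c2 c3 c4 c5 c6 c7 expr1 !mulrN; ring.
rewrite /HD prod_id ?z8 // /R0 /R1 /R2 /R3; ring.
Qed.

Lemma two_int n : ((((2%:R : int)) ^+ n)%:~R : algC) = 2%:R ^+ n.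
Proof. by rewrite rmorphXn. Qed.

Lemma HD_gbent n d : `|HD d| = sqrtC (2%:R ^+ n) <-> Req n d.
Proof.
have E : `|HD d| = sqrtC (2%:R ^+ n) <-> HD d * (HD d)^* = 2%:R ^+ n.
  rewrite -normCK; split=> [->|h]; first by rewrite sqrtCK.
  by rewrite -h sqrCK.
rewrite E HD_norm; split=> [h|[-> -> -> ->]]; last first.
  by rewrite two_int !mul0r !addr0.
have H2 : (R0 d)%:~R + (R1 d)%:~R * (z16 - z16 ^+ 7) + (R2 d)%:~R * (z16 ^+ 2 - z16 ^+ 6)
    + (R3 d)%:~R * (z16 ^+ 3 - z16 ^+ 5) - ((2 ^+ n : int)%:~R : algC) = 0.
  by rewrite h -two_int subrr.
have := indep (R0 d - 2 ^+ n) (R1 d) (R2 d) (R3 d) 0 (- R3 d) (- R2 d) (- R1 d).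
case.
  by rewrite -[RHS]H2; ring.
move=> h0 [h1 [h2 [h3 _]]].
by split=> //; apply/eqP; rewrite -subr_eq0 h0.
Qed.

Set Implicit Arguments. Unset Strict Implicit.

Definition lo n (a1 a2 a3 : Bfun n) (x : Vn n) : nat := (a1 x + 2 * a2 x + 4 * a3 x)%N.

Definition dk n (a1 a2 a3 a4 : Bfun n) (u : Vn n) (k : nat) : int :=
  \sum_(x : Vn n) (if lo a1 a2 a3 x == k then (-1) ^+ a4 x else 0) * (-1) ^+ dot u x.

Definition D n (a1 a2 a3 a4 : Bfun n) (u : Vn n) : V8 :=
  mk8 (dk a1 a2 a3 a4 u 0) (dk a1 a2 a3 a4 u 1) (dk a1 a2 a3 a4 u 2) (dk a1 a2 a3 a4 u 3)
      (dk a1 a2 a3 a4 u 4) (dk a1 a2 a3 a4 u 5) (dk a1 a2 a3 a4 u 6) (dk a1 a2 a3 a4 u 7).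

Lemma zeta16 : zeta 16 = z16.
Proof. by []. Qed.

Lemma zsh j : z16 ^+ j.+4.+4 = - z16 ^+ j.
Proof. by rewrite -[j.+4.+4]/(8 + j)%N exprD z8 mulN1r. Qed.

Lemma perx (b1 b2 b3 b4 t : bool) :
  let lo := (b1 + 2 * b2 + 4 * b3)%N in
  z16 ^+ (((b1 : nat) + 2 * b2 + 4 * b3 + 8 * b4) %% 16 %% 16) * (-1) ^+ t =
  ((if lo == 0%N then (-1) ^+ b4 else 0) * (-1) ^+ t : int)%:~R +
  ((if lo == 1%N then (-1) ^+ b4 else 0) * (-1) ^+ t : int)%:~R * z16 +
  ((if lo == 2%N then (-1) ^+ b4 else 0) * (-1) ^+ t : int)%:~R * z16 ^+ 2 +
  ((if lo == 3%N then (-1) ^+ b4 else 0) * (-1) ^+ t : int)%:~R * z16 ^+ 3 +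
  ((if lo == 4%N then (-1) ^+ b4 else 0) * (-1) ^+ t : int)%:~R * z16 ^+ 4 +
  ((if lo == 5%N then (-1) ^+ b4 else 0) * (-1) ^+ t : int)%:~R * z16 ^+ 5 +
  ((if lo == 6%N then (-1) ^+ b4 else 0) * (-1) ^+ t : int)%:~R * z16 ^+ 6 +
  ((if lo == 7%N then (-1) ^+ b4 else 0) * (-1) ^+ t : int)%:~R * z16 ^+ 7.
Proof.
by case: b1; case: b2; case: b3; case: b4; case: t; rewrite /= ?zsh; ring.
Qed.

Lemma gwalsh_D n (a1 a2 a3 a4 : Bfun n) u :
  gwalsh 16 (gb16 a1 a2 a3 a4) u = HD (D a1 a2 a3 a4 u).
Proof.
rewrite /gwalsh /HD /D /dk zeta16 /= !rmorph_sum !mulr_suml -!big_split /=.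
apply: eq_bigr => x _.
exact: perx.
Qed.

Definition wsel (w : V8) (c1 c2 c3 : bool) : int :=
  match c1, c2, c3 with
  | false, false, false => x0 w | false, false, true => x1 w
  | false, true, false => x2 w | false, true, true => x3 w
  | true, false, false => x4 w | true, false, true => x5 w
  | true, true, false => x6 w | true, true, true => x7 w
  end.

Lemma walsh_D n (a1 a2 a3 a4 : Bfun n) (c1 c2 c3 : bool) u :
  walsh (lincomb a1 a2 a3 a4 c1 c2 c3) u = wsel (wv (D a1 a2 a3 a4 u)) c1 c2 c3.
Proof.
case: c1; case: c2; case: c3;
rewrite /walsh /wsel /wv /D /dk /= -?sumrN -!big_split /=;
apply: eq_bigr => x _; rewrite /lincomb /lo;
by case: (a1 x); case: (a2 x); case: (a3 x); case: (a4 x); case: (dot u x).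
Qed.

Lemma bentP n (g : Bfun n) : bent g <-> forall u, walsh g u ^+ 2 = 2 ^+ n.
Proof.
have key (W : int) : `|(W%:~R : algC)| = sqrtC (2%:R ^+ n) <-> W ^+ 2 = 2 ^+ n.
  have E : `|(W%:~R : algC)| ^+ 2 = (W ^+ 2)%:~R by rewrite real_normK ?realz // rmorphXn.
  split=> [h|h].
    apply: (intr_inj (R := algC)); rewrite -E h sqrtCK.
    by rewrite two_int.
  by rewrite -[LHS]sqrCK ?normr_ge0 // E h two_int.
by split=> h u; apply/key; apply: h.
Qed.

Lemma walsh_ext n (g h : Bfun n) u : g =1 h -> walsh g u = walsh h u.
Proof. by move=> e; apply: eq_bigr => x _; rewrite e. Qed.

Lemma Wxor n (a1 a2 a3 a4 : Bfun n) u :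
  let w := wv (D a1 a2 a3 a4 u) in
  [/\ walsh a4 u = x0 w, walsh (xorf a3 a4) u = x1 w, walsh (xorf a2 a4) u = x2 w,
      walsh (xorf a2 (xorf a3 a4)) u = x3 w &
   [/\ walsh (xorf a1 a4) u = x4 w, walsh (xorf a1 (xorf a3 a4)) u = x5 w,
       walsh (xorf a1 (xorf a2 a4)) u = x6 w &
       walsh (xorf a1 (xorf a2 (xorf a3 a4))) u = x7 w]].
Proof.
have E c1 c2 c3 (g : Bfun n) : g =1 lincomb a1 a2 a3 a4 c1 c2 c3 ->
    walsh g u = wsel (wv (D a1 a2 a3 a4 u)) c1 c2 c3.
  by move=> e; rewrite (walsh_ext u e) walsh_D.
split; [apply: (E false false false) | apply: (E false false true)
  | apply: (E false true false) | apply: (E false true true) | split;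
   [apply: (E true false false) | apply: (E true false true)
   | apply: (E true true false) | apply: (E true true true)]];
by move=> x; rewrite /xorf /lincomb; case: (a1 x); case: (a2 x); case: (a3 x); case: (a4 x).
Qed.

Unset Implicit Arguments.
Set Strict Implicit.

Theorem mainTheorem7 (n : nat) (a1 a2 a3 a4 : Bfun n) :
  let W := @walsh n in
  let W4 := W a4 in
  let W24 := W (xorf a2 a4) in
  let W34 := W (xorf a3 a4) in
  let W234 := W (xorf a2 (xorf a3 a4)) in
  let W14 := W (xorf a1 a4) in
  let W124 := W (xorf a1 (xorf a2 a4)) in
  let W134 := W (xorf a1 (xorf a3 a4)) in
  let W1234 := W (xorf a1 (xorf a2 (xorf a3 a4))) in
  let P : int := 2 ^+ n.+1 in
  gbent 16 (gb16 a1 a2 a3 a4) <->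
  (if ~~ odd n then
     (forall c1 c2 c3 : bool, bent (lincomb a1 a2 a3 a4 c1 c2 c3)) /\
     (forall u : Vn n,
        [/\ W4 u * W24 u = W34 u * W234 u,
            W34 u * W234 u = W14 u * W124 u,
            W14 u * W124 u = W134 u * W1234 u &
            W4 u * W34 u = W14 u * W134 u])
   else
     (forall c1 c2 c3 : bool, semibent (lincomb a1 a2 a3 a4 c1 c2 c3)) /\
     (forall u : Vn n,
        ([/\ W4 u * W24 u = W14 u * W124 u,
             W14 u * W124 u = P \/ W14 u * W124 u = - P &
             [/\ W34 u = 0, W234 u = 0, W134 u = 0 & W1234 u = 0]])
        \/
        ([/\ [/\ W4 u = 0, W24 u = 0, W14 u = 0 & W124 u = 0],
             W34 u * W234 u = W134 u * W1234 u &
             W134 u * W1234 u = P \/ W134 u * W1234 u = - P]))).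
Proof.
move=> W W4 W24 W34 W234 W14 W124 W134 W1234 P.
have G : gbent 16 (gb16 a1 a2 a3 a4) <-> forall u, Wcond n (wv (D a1 a2 a3 a4 u)).
  rewrite /gbent; split=> h u.
    by apply/point/HD_gbent; rewrite -gwalsh_D; apply: h.
  by rewrite gwalsh_D; apply/HD_gbent/point; apply: h.
rewrite G /W4 /W24 /W34 /W234 /W14 /W124 /W134 /W1234 /W /P.
case hodd : (odd n) => /=.
- split=> [H|[Hs Hc] u].
    split.
      move=> c1 c2 c3; rewrite /semibent => u; rewrite hodd walsh_D.
      have := H u; rewrite /Wcond hodd /= => -[[s0 [s1 [s2 [s3 [s4 [s5 [s6 s7]]]]]]] _].
      by case: c1; case: c2; case: c3.
    move=> u; have [e0 e1 e2 e3 [e4 e5 e6 e7]] := Wxor a1 a2 a3 a4 u.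
    rewrite e0 e1 e2 e3 e4 e5 e6 e7.
    by have := H u; rewrite /Wcond hodd /= => -[_ h].
  rewrite /Wcond hodd /=; split.
    have S c1 c2 c3 := Hs c1 c2 c3 u; move: S; rewrite hodd => S.
    move: (S false false false) (S false false true) (S false true false) (S false true true)
          (S true false false) (S true false true) (S true true false) (S true true true).
    by rewrite !walsh_D /=.
  have [e0 e1 e2 e3 [e4 e5 e6 e7]] := Wxor a1 a2 a3 a4 u.
  by have := Hc u; rewrite e0 e1 e2 e3 e4 e5 e6 e7.
- split=> [H|[Hb Hc] u].
    split.
      move=> c1 c2 c3; apply/bentP => u; rewrite walsh_D.
      have := H u; rewrite /Wcond hodd /= => -[[s0 [s1 [s2 [s3 [s4 [s5 [s6 s7]]]]]]] _].
      by case: c1; case: c2; case: c3.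
    move=> u; have [e0 e1 e2 e3 [e4 e5 e6 e7]] := Wxor a1 a2 a3 a4 u.
    rewrite e0 e1 e2 e3 e4 e5 e6 e7.
    by have := H u; rewrite /Wcond hodd /= => -[_ h].
  rewrite /Wcond hodd /=; split.
    have S c1 c2 c3 := (iffLR (bentP _) (Hb c1 c2 c3)) u.
    move: (S false false false) (S false false true) (S false true false) (S false true true)
          (S true false false) (S true false true) (S true true false) (S true true true).
    by rewrite !walsh_D /=.
  have [e0 e1 e2 e3 [e4 e5 e6 e7]] := Wxor a1 a2 a3 a4 u.
  by have := Hc u; rewrite e0 e1 e2 e3 e4 e5 e6 e7.
Qed.
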